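(* Let $\mathcal{S}$ be a subcategory of $\mathbf{Set}$ such that: (1) $\mathcal{S}$ contains neither the reversal $[1]\to[1]$, $x\mapsto 1-x$, nor the diagonal $[1]\to[1]^2$, $x\mapsto(x,x)$; (2) $\mathcal{S}$ contains $\Delta_1^*$ as a wide subcategory (so the objects of $\mathcal{S}$ are exactly the sets $[1]^n$, $n\geq 0$, and every $\Delta_1^*$-morphism is an $\mathcal{S}$-morphism); (3) every $\mathcal{S}$-morphism factors as a surjective $\mathcal{S}$-morphism followed by an injective $\mathcal{S}$-morphism. Then $\mathcal{S}$ is a subcategory of $\boxplus$. Moreover, the choice $\mathcal{S}=\boxplus$ satisfies all three conditions (1)–(3).
   Context: $[1]=\{0<1\}$; for $n\geq 0$, $[1]^n$ is the $n$-fold product poset with componentwise order, $[1]^0=[0]$ a one-point poset. In a poset $P$, an interval is a non-empty subset of the form $[x,z]_P=\{y\in P: x\leq y\leq z\}$. A function between posets is interval-preserving if it maps every interval onto an interval. $\boxplus$ is the category whose objects are the posets $[1]^n$ ($n\geq 0$) and whose morphisms are all interval-preserving monotone functions between them. $\Delta_1^*$ is the smallest subcategory of $\mathbf{Set}$ which contains all functions between the sets $[0]$ and $[1]$ and is closed under Cartesian products of functions (for $f:[1]^a\to[1]^b$, $g:[1]^c\to[1]^d$, $f\times g:[1]^{a+c}\to[1]^{b+d}$); its objects are the $[1]^n$, and it is generated by the cofaces $[1]^{i-1}\times\delta_\pm\times[1]^{n-i}$ (with $\delta_-(0)=0$, $\delta_+(0)=1$, $\delta_\pm:[0]\to[1]$)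 and codegeneracies (projections $[1]^{n+1}\to[1]^n$ forgetting one coordinate). *)

(* Defs.v *)
From mathcomp Require Import all_boot.
Set Implicit Arguments. Unset Strict Implicit. Unset Printing Implicit Defensive.

(* The poset [1]^n: boolean vectors of length n, componentwise order. *)
Notation cube n := {ffun 'I_n -> bool}.
Definition cle n (x y : cube n) : bool := [forall i, x i ==> y i].

(* Morphisms between cubes in Set: (finite, hence extensional) functions. *)
Notation mor m n := {ffun cube m -> cube n}.
Definition idm n : mor n n := [ffun x => x].
Definition compm m n p (f : mor m n) (g : mor n p) : mor m p := [ffun x => g (f x)].

Definition MorClass := forall m n : nat, mor m n -> Prop.
Definition is_subcat (S : MorClass) : Prop :=
  (forall n, S n n (idm n)) /\
  (forall m n p (f : mor m n) (g : mor n p), S m n f -> S n p g -> S m p (compm f g)).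

Definition cleft a c (x : cube (a + c)) : cube a := [ffun i => x (lshift c i)].
Definition cright a c (x : cube (a + c)) : cube c := [ffun j => x (rshift a j)].
Definition cconcat b d (u : cube b) (v : cube d) : cube (b + d) :=
  [ffun k => match split k with inl i => u i | inr j => v j end].
Definition prodm a b c d (f : mor a b) (g : mor c d) : mor (a + c) (b + d) :=
  [ffun x => cconcat (f (cleft x)) (g (cright x))].

(* Delta_1^*: smallest subcategory of Set containing all functions
   between [0] = [1]^0 and [1] = [1]^1 (i.e. [0]->[1], [1]->[0], and identities)
   and closed under Cartesian products of functions. *)
Inductive Delta1s : MorClass :=
  | D1_base01 (f : mor 0 1) : Delta1s f
  | D1_base10 (f : mor 1 0) : Delta1s f
  | D1_id n : Delta1s (idm n)
  | D1_comp m n p (f : mor m n) (g : mor n p) :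
      Delta1s f -> Delta1s g -> Delta1s (compm f g)
  | D1_prod a b c d (f : mor a b) (g : mor c d) :
      Delta1s f -> Delta1s g -> Delta1s (prodm f g).

Definition reversal : mor 1 1 := [ffun x : cube 1 => [ffun i : 'I_1 => ~~ x i]].
Definition diagonal : mor 1 2 := [ffun x : cube 1 => [ffun _ : 'I_2 => x ord0]].

Definition interval n (x z : cube n) : {set cube n} := [set y | cle x y && cle y z].
Definition is_interval n (A : {set cube n}) : Prop :=
  exists x z : cube n, cle x z /\ A = interval x z.

Definition monotone m n (f : mor m n) : Prop :=
  forall x y : cube m, cle x y -> cle (f x) (f y).
Definition interval_preserving m n (f : mor m n) : Prop :=
  forall x z : cube m, cle x z -> is_interval [set f y | y in interval x z].

Definition boxplus : MorClass := fun m n f => monotone f /\ interval_preserving f.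

Definition cond1 (S : MorClass) : Prop := ~ S 1 1 reversal /\ ~ S 1 2 diagonal.
Definition cond2 (S : MorClass) : Prop := forall m n (f : mor m n), Delta1s f -> S m n f.
Definition cond3 (S : MorClass) : Prop :=
  forall m n (f : mor m n), S m n f ->
    exists k (e : mor m k) (i : mor k n),
      [/\ S m k e, S k n i, (forall y : cube k, exists x, e x = y),
          injective i & f = compm e i].

(* Main.v *)
Require Import Defs.
From mathcomp Require Import all_boot.
Set Implicit Arguments. Unset Strict Implicit. Unset Printing Implicit Defensive.

Lemma split_l1 d : split (ord0 : 'I_(1 + d)) = inl ord0.
Proof.
have -> : (ord0 : 'I_(1 + d)) = lshift d ord0 by apply: val_inj.
exact: (@unsplitK 1 d (inl ord0)).
Qed.

Lemma split_r1 d (j : 'I_d) : split (lift ord0 j : 'I_(1 + d)) = inr j.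
Proof.
have -> : (lift ord0 j : 'I_(1 + d)) = rshift 1 j by apply: val_inj.
exact: (@unsplitK 1 d (inr j)).
Qed.

Lemma split_0 d (j : 'I_(0 + d)) : split j = inr (j : 'I_d).
Proof.
have E : rshift 0 (j : 'I_d) = j by apply: val_inj.
by rewrite -[in LHS]E (@unsplitK 0 d (inr _)).
Qed.

Lemma cleft1 c (x : cube (1 + c)) : cleft x ord0 = x ord0.
Proof. by rewrite ffunE; congr (x _); apply: val_inj. Qed.

Lemma cright1 c (x : cube (1 + c)) j : cright x j = x (lift ord0 j).
Proof. by rewrite ffunE; congr (x _); apply: val_inj. Qed.

Lemma cright0 c (x : cube (0 + c)) j : cright x j = x j.
Proof. by rewrite ffunE; congr (x _); apply: val_inj. Qed.

Lemma prodmE a b c d (f : mor a b) (g : mor c d) x k :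
  prodm f g x k = match split k with inl i => f (cleft x) i | inr j => g (cright x) j end.
Proof. by rewrite !ffunE. Qed.

Lemma cube0 (u v : cube 0) : u = v.
Proof. by apply/ffunP => -[]. Qed.

Lemma E_to0 m : exists f : mor m 0, Delta1s f.
Proof.
elim: m => [|m [g Hg]]; first by exists (idm 0); constructor.
exists (prodm ([ffun _ => [ffun i => false]] : mor 1 0) g : mor m.+1 0).
exact: (@D1_prod 1 0 m 0 _ _ (D1_base10 _) Hg).
Qed.

Lemma lshift1 c : (lshift c ord0 : 'I_(1 + c)) = ord0.
Proof. exact: val_inj. Qed.
Lemma rshift1 c (j : 'I_c) : (rshift 1 j : 'I_(1 + c)) = lift ord0 j.
Proof. exact: val_inj. Qed.
Lemma rshift0 c (j : 'I_c) : (rshift 0 j : 'I_(0 + c)) = j.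
Proof. exact: val_inj. Qed.

Lemma E_const m (x : cube m) : exists f : mor 0 m, Delta1s f /\ forall t, f t = x.
Proof.
elim: m x => [|m IH] x; first by exists (idm 0); split; [constructor|move=> t; apply: cube0].
have [g [Hg Eg]] := IH [ffun j => x (lift ord0 j)].
exists (prodm ([ffun _ => [ffun _ => x ord0]] : mor 0 1) g : mor 0 m.+1); split.
  exact: (@D1_prod 0 1 0 m _ _ (D1_base01 _) Hg).
move=> t; apply/ffunP => k; rewrite !ffunE.
by case: (unliftP ord0 k) => [j|] ->; rewrite ?split_r1 ?split_l1 ?Eg !ffunE.
Qed.

Lemma E_proj n (j : 'I_n) : exists p : mor n 1, Delta1s p /\ forall y, p y ord0 = y j.
Proof.
elim: n j => [|n IH] j; first by case: j.
case: (unliftP ord0 j) => [j'|] ->.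
  have [p [Hp Ep]] := IH j'.
  exists (prodm ([ffun _ => [ffun i => false]] : mor 1 0) p : mor n.+1 1); split.
    exact: (@D1_prod 1 0 n 1 _ _ (D1_base10 _) Hp).
  by move=> y; rewrite !ffunE split_0 /= Ep cright1.
have [g Hg] := E_to0 n.
exists (prodm (idm 1) g : mor n.+1 1); split; first exact: (@D1_prod 1 1 n 0 _ _ (D1_id 1) Hg).
by move=> y; rewrite !ffunE split_l1 !ffunE; congr (y _); apply: val_inj.
Qed.

Lemma E_pair n (b b' : 'I_n) : b < b' -> exists p : mor n 2, Delta1s p /\
  forall y (k : 'I_2), p y k = if val k == 0 then y b else y b'.
Proof.
elim: n b b' => [|n IH] b b' lt; first by case: b lt.
move: lt; case: (unliftP ord0 b) => [c|] ->; case: (unliftP ord0 b') => [c'|] -> lt.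
- have [p [Hp Ep]] := IH c c' lt.
  exists (prodm ([ffun _ => [ffun i => false]] : mor 1 0) p : mor n.+1 2); split.
    exact: (@D1_prod 1 0 n 2 _ _ (D1_base10 _) Hp).
  by move=> y k; rewrite !ffunE split_0 /= Ep !cright1.
- by [].
- have [p [Hp Ep]] := E_proj c'.
  exists (prodm (idm 1) p : mor n.+1 2); split; first exact: (@D1_prod 1 1 n 1 _ _ (D1_id 1) Hp).
  move=> y k; rewrite !ffunE.
  case: (unliftP ord0 k) => [j|] ->; rewrite ?split_r1 ?split_l1 ?ffunE /=.
    by rewrite (ord1 j) Ep cright1.
  by congr (y _); apply: val_inj.
- by [].
Qed.

Lemma E_edge k (x : cube k) (a : 'I_k) : exists s : mor 1 k, Delta1s s /\
  forall t i, s t i = if i == a then t ord0 else x i.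
Proof.
elim: k x a => [|k IH] x a; first by case: a.
case: (unliftP ord0 a) => [a'|] ->.
  have [s [Hs Es]] := IH [ffun j => x (lift ord0 j)] a'.
  have [h [Hh Eh]] := E_const [ffun _ : 'I_1 => x ord0].
  exists (prodm h s : mor 1 k.+1); split; first exact: (@D1_prod 0 1 1 k _ _ Hh Hs).
  move=> t i; rewrite !ffunE.
  case: (unliftP ord0 i) => [j|] ->; rewrite ?split_r1 ?split_l1.
    by rewrite Es (inj_eq (@lift_inj _ ord0)) !ffunE; congr (if _ then t _ else _); apply: val_inj.
  by rewrite Eh ffunE.
have [h [Hh Eh]] := E_const [ffun j => x (lift ord0 j)].
exists (prodm (idm 1) h : mor 1 k.+1); split; first exact: (@D1_prod 1 1 0 k _ _ (D1_id 1) Hh).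
move=> t i; rewrite !ffunE.
case: (unliftP ord0 i) => [j|] ->; rewrite ?split_r1 ?split_l1.
  by rewrite Eh ffunE.
by rewrite eqxx !ffunE; congr (t _); apply: val_inj.
Qed.

Lemma E_coord m (c : 'I_m -> option bool) : exists r : mor m m, Delta1s r /\
  forall y i, r y i = if c i is Some b then b else y i.
Proof.
elim: m c => [|m IH] c; first by exists (idm 0); split; [constructor|move=> y [] ].
have [r [Hr Er]] := IH (fun j => c (lift ord0 j)).
pose h : mor 1 1 := if c ord0 is Some b then compm ([ffun _ => [ffun i => false]] : mor 1 0)
   ([ffun _ => [ffun _ => b]] : mor 0 1) else idm 1.
have Hh : Delta1s h by rewrite /h; case: (c ord0) => [b|]; repeat constructor.
have Eh : forall t, h t ord0 = if c ord0 is Some b then b else t ord0.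
  by move=> t; rewrite /h; case: (c ord0) => [b|]; rewrite !ffunE.
exists (prodm h r : mor m.+1 m.+1); split; first exact: (@D1_prod 1 1 m m _ _ Hh Hr).
move=> y i; rewrite !ffunE.
case: (unliftP ord0 i) => [j|] ->; rewrite ?split_r1 ?split_l1.
  by rewrite Er ffunE rshift1.
by rewrite Eh ffunE lshift1.
Qed.

Definition bot m : cube m := [ffun _ => false].
Definition top m : cube m := [ffun _ => true].
Definition upd m (x : cube m) a b : cube m := [ffun i => if i == a then b else x i].
Definition chain m (x y : cube m) (k : nat) : cube m := [ffun i : 'I_m => if (i : nat) < k then y i else x i].
Definition hd n (u v : cube n) := #|[set b | u b != v b]|.

Lemma cleP m (x y : cube m) : reflect (forall i, x i -> y i) (cle x y).
Proof. by apply: (iffP forallP) => H i; [apply/implyP|apply/implyP/H]. Qed.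

Lemma cle_refl m (x : cube m) : cle x x.
Proof. by apply/cleP. Qed.

Lemma cle_trans m (x y z : cube m) : cle x y -> cle y z -> cle x z.
Proof. by move=> /cleP H1 /cleP H2; apply/cleP => i /H1 /H2. Qed.

Lemma cle_anti m (x y : cube m) : cle x y -> cle y x -> x = y.
Proof.
move=> /cleP H1 /cleP H2; apply/ffunP => i.
by case E: (x i); case E': (y i) => //; [move: (H1 i E); rewrite E' | move: (H2 i E'); rewrite E].
Qed.

Lemma cle_bot m (x : cube m) : cle (bot m) x.
Proof. by apply/cleP => i; rewrite ffunE. Qed.

Lemma cle_top m (x : cube m) : cle x (top m).
Proof. by apply/cleP => i; rewrite ffunE. Qed.

Lemma upd_id m (x : cube m) a : upd x a (x a) = x.
Proof. by apply/ffunP => i; rewrite ffunE; case: eqP => // ->. Qed.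

Lemma chain0 m (x y : cube m) : chain x y 0 = x.
Proof. by apply/ffunP => i; rewrite ffunE. Qed.

Lemma chainm m (x y : cube m) : chain x y m = y.
Proof. by apply/ffunP => i; rewrite ffunE ltn_ord. Qed.

Lemma chain_step m (x y : cube m) : cle x y -> forall k,
  chain x y k.+1 = chain x y k \/
  exists a, chain x y k a = false /\ chain x y k.+1 = upd (chain x y k) a true.
Proof.
move=> /cleP Hxy k; case: (ltnP k m) => hk; last first.
  left; apply/ffunP => i; rewrite !ffunE.
  by rewrite (leq_trans (ltn_ord i) hk) (leq_trans (ltn_ord i) (leqW hk)).
pose a := Ordinal hk.
case E: (x a == y a).
  left; apply/ffunP => i; rewrite !ffunE ltnS leq_eqVlt.
  case: eqP => //= ik; have -> : i = a by apply: val_inj.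
  by rewrite ltnn; apply/eqP; rewrite eq_sym E.
right; exists a.
have xa : x a = false by move: E; case: (x a) (Hxy a) => // ->.
have ya : y a = true by move: E; rewrite xa; case: (y a).
split; first by rewrite ffunE ltnn.
apply/ffunP => i; rewrite !ffunE ltnS leq_eqVlt.
case: (boolP (i == a)) => [/eqP -> | ia].
  by rewrite eqxx ya.
have -> : (nat_of_ord i == k) = false.
  by apply/negbTE; apply: contra ia => /eqP ik; apply/eqP; apply: val_inj.
by [].
Qed.

Lemma chain_ind m (x y : cube m) (Q : nat -> cube m -> Prop) : cle x y ->
  Q 0 x -> (forall k u, Q k u -> Q k.+1 u) ->
  (forall k u a, Q k u -> u a = false -> Q k.+1 (upd u a true)) -> Q m y.
Proof.
move=> Hxy H0 H1 H2; rewrite -(chainm x y).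
suff: forall k, Q k (chain x y k) by [].
elim => [|k IH]; first by rewrite chain0.
case: (chain_step Hxy k) => [-> | [a [ha ->]]]; [exact: H1 | exact: H2].
Qed.

Lemma hd_tri n (u v w : cube n) : hd u w <= hd u v + hd v w.
Proof.
rewrite /hd; apply: leq_trans (leq_card_setU _ _).
apply: subset_leq_card; apply/subsetP => b; rewrite !inE.
by case: (u b); case: (v b); case: (w b).
Qed.

Lemma hd0 n (u : cube n) : hd u u = 0.
Proof. by rewrite /hd; apply/eqP; rewrite cards_eq0; apply/eqP/setP => b; rewrite !inE eqxx. Qed.

Lemma S_comp S m n p (f : mor m n) (g : mor n p) :
  is_subcat S -> S m n f -> S n p g -> S m p (compm f g).
Proof. by move=> [_ H]; apply: H. Qed.

Lemma upd_edge k (x : cube k) a (s : mor 1 k) :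
  (forall t i, s t i = if i == a then t ord0 else x i) -> forall t, s t = upd x a (t ord0).
Proof. by move=> Es t; apply/ffunP => i; rewrite Es ffunE. Qed.

Lemma mono_edge S m n (f : mor m n) : is_subcat S -> cond1 S -> cond2 S -> S m n f ->
  forall (x : cube m) (a : 'I_m), x a = false -> cle (f x) (f (upd x a true)).
Proof.
move=> HS [H1 _] H2 Sf x a xa.
apply/forallP => j; apply/implyP => h1; apply/negPn/negP => h2.
have [s [Hs Es]] := E_edge x a; have [p [Hp Ep]] := E_proj j.
apply: H1; have -> : reversal = compm (compm s f) p.
  apply/ffunP => t; apply/ffunP => i; rewrite (ord1 i) /reversal !ffunE Ep (upd_edge Es).
  case: (t ord0) => /=; first by rewrite (negbTE h2).
  by rewrite -xa upd_id h1.
by apply: (S_comp HS) (H2 _ _ _ Hp); apply: (S_comp HS) Sf; apply: H2.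
Qed.

Lemma mono_S S m n (f : mor m n) : is_subcat S -> cond1 S -> cond2 S -> S m n f -> monotone f.
Proof.
move=> HS H1 H2 Sf x y Hxy.
apply: (@chain_ind _ x y (fun _ u => cle (f x) (f u))) => //; first exact: cle_refl.
by move=> k u a H ua; apply: cle_trans H (mono_edge HS H1 H2 Sf ua).
Qed.

Lemma one_flip S m n (f : mor m n) : is_subcat S -> cond1 S -> cond2 S -> S m n f ->
  forall (x : cube m) (a : 'I_m), x a = false -> hd (f x) (f (upd x a true)) <= 1.
Proof.
move=> HS H1 H2 Sf x a xa.
have Hm := mono_edge HS H1 H2 Sf xa.
rewrite leqNgt; apply/negP => /card_gt1P [b0 [b1 [hb0 hb1 neq]]].
have key : forall b, b \in [set b | f x b != f (upd x a true) b] ->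
    f x b = false /\ f (upd x a true) b = true.
  move=> b; rewrite inE; move/cleP: Hm => /(_ b).
  by case: (f x b); case: (f (upd x a true) b) => //= h; have := h isT.
wlog lt : b0 b1 hb0 hb1 neq / b0 < b1.
  move=> W; case: (ltngtP b0 b1) => h; first exact: (W b0 b1).
    by apply: (W b1 b0) => //; rewrite eq_sym.
  by move: neq; rewrite (val_inj h) eqxx.
have [s [Hs Es]] := E_edge x a; have [p [Hp Ep]] := E_pair lt.
apply: H1.2; have -> : diagonal = compm (compm s f) p.
  apply/ffunP => t; apply/ffunP => k; rewrite /diagonal !ffunE Ep (upd_edge Es).
  have [k0 k0'] := key _ hb0; have [k1 k1'] := key _ hb1.
  case: (t ord0) => /=; first by case: ifP.
  have -> : upd x a false = x by rewrite -xa upd_id.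
  by case: ifP.
by apply: (S_comp HS) (H2 _ _ _ Hp); apply: (S_comp HS) Sf; apply: H2.
Qed.

Lemma card_interval n (p q : cube n) : #|interval p q| <= 2 ^ hd p q.
Proof.
pose D := [set b | p b != q b].
pose phi := fun y : cube n => ([ffun k : 'I_#|D| => y (enum_val k)] : {ffun 'I_#|D| -> bool}).
have inj : {in interval p q &, injective phi}.
  move=> y y'; rewrite !inE => /andP [/cleP h1 /cleP h2] /andP [/cleP h1' /cleP h2'] E.
  apply/ffunP => b; case: (boolP (b \in D)) => bD.
    have := congr1 (fun g : {ffun 'I_#|D| -> bool} => g (enum_rank_in bD b)) E; rewrite /phi !ffunE.
    by rewrite enum_rankK_in.
  move: bD; rewrite inE negbK => /eqP pq.
  move: (h1 b) (h2 b) (h1' b) (h2' b); rewrite pq.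
  by case: (q b); case: (y b); case: (y' b) => //= A B C D'; [have := C isT | have := A isT | have := B isT | have := D' isT].
rewrite -(card_in_imset inj); apply: leq_trans (max_card _) _.
by rewrite card_ffun card_bool card_ord.
Qed.

Lemma inj_surj S j n (i : mor j n) : is_subcat S -> cond1 S -> cond2 S -> S j n i ->
  injective i -> forall w, cle (i (bot j)) w -> cle w (i (top j)) -> exists u, i u = w.
Proof.
move=> HS H1 H2 Si inj w hw1 hw2.
have mono := mono_S HS H1 H2 Si.
pose A := [set i u | u : cube j]; pose B := interval (i (bot j)) (i (top j)).
have sAB : A \subset B.
  by apply/subsetP => v /imsetP [u _ ->]; rewrite inE !mono ?cle_bot ?cle_top.
have hdj : hd (i (bot j)) (i (top j)) <= j.
  apply: (@chain_ind _ (bot j) (top j) (fun k u => hd (i (bot j)) (i u) <= k)).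
  - exact: cle_bot.
  - by rewrite hd0.
  - by move=> k u H; apply: leqW.
  - move=> k u a H ua; apply: leq_trans (hd_tri _ (i u) _) _.
    by rewrite -addn1 leq_add // (one_flip HS H1 H2 Si ua).
have cA : #|A| = 2 ^ j by rewrite card_imset // card_ffun card_bool card_ord.
have : A == B.
  rewrite eqEcard sAB cA /=; apply: leq_trans (card_interval _ _) _.
  by rewrite leq_exp2l.
move/eqP => AB.
have : w \in A by rewrite AB inE hw1 hw2.
by case/imsetP => u _ ->; exists u.
Qed.

Lemma surj_bot S m k (e : mor m k) : is_subcat S -> cond1 S -> cond2 S -> S m k e ->
  (forall y, exists x, e x = y) -> e (bot m) = bot k /\ e (top m) = top k.
Proof.
move=> HS H1 H2 Se sur; have mono := mono_S HS H1 H2 Se.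
have [x0 E0] := sur (bot k); have [x1 E1] := sur (top k).
split; apply: cle_anti.
- by rewrite -E0; apply: mono; apply: cle_bot.
- exact: cle_bot.
- exact: cle_top.
- by rewrite -E1; apply: mono; apply: cle_top.
Qed.

Lemma image_S S m n (g : mor m n) : is_subcat S -> cond1 S -> cond2 S -> cond3 S -> S m n g ->
  forall w, cle (g (bot m)) w -> cle w (g (top m)) -> exists y, g y = w.
Proof.
move=> HS H1 H2 H3 Sg w hw1 hw2.
have [k [e [i [Se Si sur inj Eg]]]] := H3 _ _ _ Sg.
have [eb et] := surj_bot HS H1 H2 Se sur.
have [u iu] : exists u, i u = w.
  apply: (inj_surj HS H1 H2 Si inj).
    by rewrite -eb; move: hw1; rewrite Eg ffunE.
  by rewrite -et; move: hw2; rewrite Eg ffunE.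
have [x ex] := sur u; exists x; by rewrite Eg ffunE ex.
Qed.

Lemma part1 S : is_subcat S -> cond1 S -> cond2 S -> cond3 S ->
  forall m n (f : mor m n), S m n f -> boxplus f.
Proof.
move=> HS H1 H2 H3 m n f Sf; split; first exact: (mono_S HS H1 H2 Sf).
move=> x z xz.
have [r [Hr Er]] := E_coord (fun i => if x i == z i then Some (x i) else None).
have Sg : S m n (compm r f) by apply: (S_comp HS) Sf; apply: H2.
have mg := mono_S HS H1 H2 Sg.
have rin : forall y, r y \in interval x z.
  move=> y; rewrite inE; apply/andP; split; apply/cleP => i; rewrite Er;
  move/cleP: xz => /(_ i); case: eqP => [-> //|]; case: (x i); case: (z i); case: (y i) => //.
have rid : forall y, y \in interval x z -> r y = y.
  move=> y; rewrite inE => /andP [/cleP h1 /cleP h2]; apply/ffunP => i; rewrite Er.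
  case: eqP => // E; move: (h1 i) (h2 i); rewrite E.
  by case: (z i); case: (y i) => // A B; [have := A isT | have := B isT].
exists (compm r f (bot m)), (compm r f (top m)); split.
  by apply: mg; apply: cle_bot.
apply/setP => w; apply/imsetP/idP.
  case=> y yin ->; rewrite inE.
  have -> : f y = compm r f y by rewrite ffunE rid.
  by rewrite !mg ?cle_bot ?cle_top.
rewrite inE => /andP [h1 h2]; have [y <-] := image_S HS H1 H2 H3 Sg h1 h2.
by exists (r y); rewrite ?rin // ffunE.
Qed.

Lemma interval_in n (x z y : cube n) : (y \in interval x z) = cle x y && cle y z.
Proof. by rewrite inE. Qed.

Lemma bp_id n : boxplus (idm n).
Proof.
split; first by move=> x y; rewrite !ffunE.
move=> x z xz; exists x, z; split => //; apply/setP => y.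
apply/imsetP/idP => [[y' yin ->]|yin]; first by rewrite ffunE.
by exists y; rewrite ?ffunE.
Qed.

Lemma bp_comp m n p (f : mor m n) (g : mor n p) : boxplus f -> boxplus g -> boxplus (compm f g).
Proof.
move=> [mf pf] [mg pg]; split; first by move=> x y xy; rewrite !ffunE; apply/mg/mf.
move=> x z xz; have [a [b [ab E]]] := pf x z xz.
have [c [d [cd E']]] := pg a b ab.
exists c, d; split => //; rewrite -E' -E -imset_comp.
by apply: eq_imset => y; rewrite ffunE.
Qed.

Lemma is_subcat_bp : is_subcat boxplus.
Proof. split; [exact: bp_id | move=> m n p f g; exact: bp_comp]. Qed.

Lemma cond1_bp : cond1 boxplus.
Proof.
split.
  move=> [mr _]; have := mr (bot 1) (top 1) (cle_top _).
  by move/cleP => /(_ ord0); rewrite /reversal !ffunE => /(_ isT).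
move=> [_ pd]; have [a [b [ab E]]] := pd (bot 1) (top 1) (cle_top _).
have h0 : diagonal (bot 1) \in interval a b by rewrite -E; apply: imset_f; rewrite inE cle_refl cle_top.
have h1 : diagonal (top 1) \in interval a b by rewrite -E; apply: imset_f; rewrite inE cle_refl cle_bot.
pose w : cube 2 := [ffun i : 'I_2 => val i == 1].
have : w \in interval a b.
  move: h0 h1; rewrite !inE => /andP [h0 _] /andP [_ h1]; apply/andP; split.
    by apply: cle_trans h0 _; apply/cleP => i; rewrite !ffunE.
  by apply: cle_trans h1; apply/cleP => i; rewrite !ffunE.
rewrite -E => /imsetP [y _ Ey].
have := congr1 (fun v : cube 2 => v ord0) Ey; have := congr1 (fun v : cube 2 => v ord_max) Ey.
by rewrite /diagonal !ffunE /= => <-.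
Qed.

Lemma bp_from0 n (f : mor 0 n) : boxplus f.
Proof.
split; first by move=> x y _; rewrite (cube0 x y) cle_refl.
move=> x z _; exists (f x), (f x); split; first exact: cle_refl.
apply/setP => v; rewrite inE; apply/imsetP/idP => [[y _ ->]|/andP [h1 h2]].
  by rewrite (cube0 y x) cle_refl.
by exists x; [rewrite inE cle_refl (cube0 x z) cle_refl | apply: cle_anti].
Qed.

Lemma bp_to0 m (f : mor m 0) : boxplus f.
Proof.
split; first by move=> x y _; rewrite (cube0 (f x) (f y)) cle_refl.
move=> x z xz; exists (f x), (f x); split; first exact: cle_refl.
apply/setP => v; rewrite inE (cube0 v (f x)) cle_refl /=.
by apply/imsetP; exists x; rewrite ?inE ?cle_refl.
Qed.

Lemma cleft_cc b d (u : cube b) (v : cube d) : cleft (cconcat u v) = u.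
Proof. by apply/ffunP => i; rewrite !ffunE (@unsplitK b d (inl i)). Qed.

Lemma cright_cc b d (u : cube b) (v : cube d) : cright (cconcat u v) = v.
Proof. by apply/ffunP => i; rewrite !ffunE (@unsplitK b d (inr i)). Qed.

Lemma ccK a c (x : cube (a + c)) : cconcat (cleft x) (cright x) = x.
Proof.
apply/ffunP => k; rewrite !ffunE; case: splitP => [i E|j E]; rewrite ffunE;
by congr (x _); apply: val_inj; rewrite /= E.
Qed.

Lemma cle_split a c (x y : cube (a + c)) :
  cle x y = cle (cleft x) (cleft y) && cle (cright x) (cright y).
Proof.
apply/cleP/andP => [H|[/cleP h1 /cleP h2] k].
  by split; apply/cleP => i; rewrite !ffunE; apply: H.
rewrite -(ccK x) -(ccK y) !ffunE; case: (split k) => i; [exact: h1 | exact: h2].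
Qed.

Lemma cle_cc b d (u u' : cube b) (v v' : cube d) :
  cle (cconcat u v) (cconcat u' v') = cle u u' && cle v v'.
Proof. by rewrite cle_split !cleft_cc !cright_cc. Qed.

Lemma bp_prod a b c d (f : mor a b) (g : mor c d) : boxplus f -> boxplus g -> boxplus (prodm f g).
Proof.
move=> [mf pf] [mg pg]; split.
  move=> x y; rewrite cle_split !ffunE cle_cc => /andP [h1 h2].
  by rewrite mf // mg.
move=> x z; rewrite cle_split => /andP [xz1 xz2].
have [p [q [pq E]]] := pf _ _ xz1; have [p' [q' [pq' E']]] := pg _ _ xz2.
exists (cconcat p p'), (cconcat q q'); split; first by rewrite cle_cc pq pq'.
apply/setP => w; apply/imsetP/idP => [[y yin ->]|].
  rewrite ffunE inE !cle_cc.
  move: yin; rewrite inE !cle_split => /andP [/andP [h1 h2] /andP [h3 h4]].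
  have : f (cleft y) \in interval p q by rewrite -E; apply: imset_f; rewrite inE h1 h3.
  have : g (cright y) \in interval p' q' by rewrite -E'; apply: imset_f; rewrite inE h2 h4.
  by rewrite !inE => /andP [-> ->] /andP [-> ->].
move=> win; have : cle (cconcat p p') (cconcat (cleft w) (cright w)) &&
  cle (cconcat (cleft w) (cright w)) (cconcat q q').
  by rewrite ccK -interval_in.
rewrite !cle_cc => /andP [/andP [h1 h2] /andP [h3 h4]].
have : cleft w \in interval p q by rewrite inE h1 h3.
rewrite -E => /imsetP [y1 y1in e1].
have : cright w \in interval p' q' by rewrite inE h2 h4.
rewrite -E' => /imsetP [y2 y2in e2].
exists (cconcat y1 y2).
  move: y1in y2in; rewrite !inE !cle_split !cleft_cc !cright_cc.
  by move=> /andP [-> ->] /andP [-> ->].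
by rewrite ffunE cleft_cc cright_cc -e1 -e2 ccK.
Qed.

Lemma cond2_bp : cond2 boxplus.
Proof.
move=> m n f; elim => {m n f}.
- move=> f; exact: bp_from0.
- move=> f; exact: bp_to0.
- exact: bp_id.
- move=> m n p f g _ Hf _ Hg; exact: bp_comp.
- move=> a b c d f g _ Hf _ Hg; exact: bp_prod.
Qed.

Definition prj n (D : {set 'I_n}) (y : cube n) : cube #|D| := [ffun k => y (enum_val k)].
Definition ins n (D : {set 'I_n}) (c : cube n) (u : cube #|D|) : cube n :=
  [ffun j => if [pick k : 'I_#|D| | enum_val k == j] is Some k then u k else c j].

Arguments ins {n} D c u.
Arguments prj {n} D y.

Lemma prj_ins n (D : {set 'I_n}) (c : cube n) (u : cube #|D|) : prj D (ins D c u) = u.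
Proof.
apply/ffunP => k; rewrite !ffunE; case: pickP => [k' /eqP E|none].
  by rewrite (enum_val_inj E).
by have := none k; rewrite eqxx.
Qed.

Lemma ins_out n (D : {set 'I_n}) (c : cube n) (u : cube #|D|) j : j \notin D -> ins D c u j = c j.
Proof.
move=> jD; rewrite ffunE; case: pickP => [k /eqP E|//].
by move: jD; rewrite -E enum_valP.
Qed.


Lemma ins_prj n (D : {set 'I_n}) (c y : cube n) : (forall j, j \notin D -> y j = c j) -> ins D c (prj D y) = y.
Proof.
move=> H; apply/ffunP => j; rewrite ffunE; case: pickP => [k /eqP <-|none].
  by rewrite ffunE.
case: (boolP (j \in D)) => jD; last by rewrite H.
by have := none (enum_rank_in jD j); rewrite enum_rankK_in // eqxx.
Qed.

Lemma cle_prj n (D : {set 'I_n}) (y y' : cube n) : cle y y' -> cle (prj D y) (prj D y').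
Proof. by move/cleP => H; apply/cleP => k; rewrite !ffunE; apply: H. Qed.

Lemma cle_ins n (D : {set 'I_n}) (c c' : cube n) (u u' : cube #|D|) : cle c c' -> cle u u' -> cle (ins D c u) (ins D c' u').
Proof.
move=> /cleP h1 /cleP h2; apply/cleP => j; rewrite !ffunE.
by case: pickP => [k _|_]; [apply: h2 | apply: h1].
Qed.

Lemma ins_interval n (D : {set 'I_n}) (c d : cube n) (u : cube #|D|) :
  cle c d -> cle (prj D c) u -> cle u (prj D d) -> ins D c u \in interval c d.
Proof.
move=> /cleP cd /cleP h1 /cleP h2; rewrite inE; apply/andP; split; apply/cleP => j; rewrite ffunE;
case: pickP => [k /eqP <-|_] //.
- by move=> H; apply: h1; rewrite ffunE.
- by move=> H; have := h2 k H; rewrite ffunE.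
- exact: cd.
Qed.

Lemma cond3_bp : cond3 boxplus.
Proof.
move=> m n f [mf pf].
have [a [b [ab E]]] := pf (bot m) (top m) (cle_bot _).
have fin : forall x, f x \in interval a b.
  by move=> x; rewrite -E; apply: imset_f; rewrite inE cle_bot cle_top.
pose D := [set j | a j != b j].
have outD : forall y, y \in interval a b -> forall j, j \notin D -> y j = a j.
  move=> y; rewrite inE => /andP [/cleP h1 /cleP h2] j; rewrite inE negbK => /eqP ajb.
  move: (h1 j) (h2 j); rewrite -ajb.
  by case: (a j); case: (y j) => //= A B; first [by have := A isT | by have := B isT].
have inD : forall j, j \in D -> a j = false /\ b j = true.
  move=> j; rewrite inE; move/cleP: ab => /(_ j).
  by case: (a j); case: (b j) => //= A _; have := A isT.
have prja : prj D a = bot _ by apply/ffunP => k; rewrite !ffunE; case: (inD _ (enum_valP k)).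
have prjb : prj D b = top _ by apply/ffunP => k; rewrite !ffunE; case: (inD _ (enum_valP k)).
exists #|D|, [ffun x => prj D (f x)], [ffun u => ins D a u]; split.
- split; first by move=> x y xy; rewrite !ffunE; apply/cle_prj/mf.
  move=> x z xz; have [p [q [pq E']]] := pf x z xz.
  exists (prj D p), (prj D q); split; first exact: cle_prj.
  apply/setP => w; apply/imsetP/idP => [[y yin ->]|].
    have : f y \in interval p q by rewrite -E'; apply: imset_f.
    by rewrite ffunE !inE => /andP [h1 h2]; rewrite !cle_prj.
  rewrite inE => /andP [h1 h2].
  have : ins D p w \in interval p q by apply: ins_interval.
  rewrite -E' => /imsetP [y yin ey]; exists y => //.
  by rewrite ffunE -ey prj_ins.
- split; first by move=> u u' uu; rewrite !ffunE; apply: cle_ins => //; apply: cle_refl.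
  move=> u u' uu; exists (ins D a u), (ins D a u'); split.
    by apply: cle_ins => //; apply: cle_refl.
  apply/setP => v; apply/imsetP/idP => [[y yin ->]|].
    move: yin; rewrite ffunE !inE => /andP [h1 h2].
    by rewrite !cle_ins ?cle_refl.
  rewrite inE => /andP [h1 h2].
  have vout : forall j, j \notin D -> v j = a j.
    move=> j jD; move/cleP: h1 => /(_ j); move/cleP: h2 => /(_ j).
    rewrite !ins_out //.
    by case: (a j); case: (v j) => //= A B; first [by have := A isT | by have := B isT].
  exists (prj D v); last by rewrite ffunE ins_prj.
  rewrite inE; apply/andP; split.
    by rewrite -(prj_ins a u); apply: cle_prj.
  by rewrite -(prj_ins a u'); apply: cle_prj.
- move=> u.
  have : ins D a u \in interval a b by apply: ins_interval; rewrite ?prja ?prjb ?cle_bot ?cle_top.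
  rewrite -E => /imsetP [x _ ex]; exists x.
  by rewrite ffunE -ex prj_ins.
- move=> u u'; rewrite !ffunE => H.
  by rewrite -(prj_ins a u) H prj_ins.
- apply/ffunP => x; rewrite !ffunE ins_prj //.
  exact: outD (fin x).
Qed.

Theorem mainTheorem1 :
  (forall S : MorClass,
     is_subcat S -> cond1 S -> cond2 S -> cond3 S ->
     forall m n (f : mor m n), S m n f -> boxplus f)
  /\ (is_subcat boxplus /\ cond1 boxplus /\ cond2 boxplus /\ cond3 boxplus).
Proof.
split; first exact: part1.
split; first exact: is_subcat_bp.
split; first exact: cond1_bp.
split; [exact: cond2_bp | exact: cond3_bp].
Qed.
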